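(* Let $\mathcal{M}$ be a set of models, $c$ a cost function, $\mathcal{S}$ a step neighborhood function and $m_0$ a base model, as in the context. Assume there exist constants $c_{\min},c_{\max}$ with $0<c_{\min}\le c(m)\le c_{\max}$ for all $m\in\mathcal{M}$. Let $\gamma\ge1$ and $\lambda>0$, and for $K\ge0$ let $$z_\lambda(K)=\inf_{\bm{m}\in\mathcal{P}_K}\Big(c(m_K)+\lambda\sum_{k=1}^K\gamma^k c(m_k)\Big).$$ Then every $K_{\mathrm{opt}}\in\arg\min_{K\ge0} z_\lambda(K)$ satisfies $K_{\mathrm{opt}}\le K_{\max}$, where $$K_{\max}=\begin{cases}\dfrac{c_{\max}}{\lambda c_{\min}} & \text{if }\gamma=1,\\[2mm] \dfrac{\log\!\left(1+\frac{(\gamma-1)c_{\max}}{\lambda\gamma c_{\min}}\right)}{\log\gamma} & \text{if }\gamma>1.\end{cases}$$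
   Context: Setting: $\mathcal{M}$ is a set (of models), $c:\mathcal{M}\to(0,\infty)$ is a cost function, and $\mathcal{S}:\mathcal{M}\to 2^{\mathcal{M}}$ is a step neighborhood function with $\mathcal{S}(m)\neq\emptyset$ for all $m$. A fixed base model $m_0\in\mathcal{M}$ is given. An interpretable path of length $K\ge 0$ is a sequence $\bm{m}=(m_1,\dots,m_K)$ with $m_k\in\mathcal{S}(m_{k-1})$ for $1\le k\le K$; its final model is $m_K$ (which is $m_0$ when $K=0$, in which case the sum in $z_\lambda(0)$ is empty and $z_\lambda(0)=c(m_0)$). $\mathcal{P}_K$ denotes the set of interpretable paths of length $K$. *)

(* Defs.v *)
From HB Require Import structures.
From mathcomp Require Import all_boot all_order all_algebra.
From mathcomp Require Import all_classical all_reals all_analysis.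
Set Implicit Arguments. Unset Strict Implicit. Unset Printing Implicit Defensive.
Import Order.TTheory GRing.Theory Num.Theory.
Local Open Scope classical_set_scope.
Local Open Scope ring_scope.

Fixpoint is_interp_path (M : Type) (S : M -> set M) (mprev : M) (s : seq M) : Prop :=
  match s with
  | [::] => True
  | m :: s' => S mprev m /\ is_interp_path S m s'
  end.

Definition paths_K (M : Type) (S : M -> set M) (m0 : M) (K : nat) : set (seq M) :=
  [set s | size s = K /\ is_interp_path S m0 s].

(* objective: c(m_K) + lam * sum_{k=1}^K gam^k c(m_k); final model is last m0 s
   (= m0 when K = 0). nth m0 s k is m_{k+1}. *)
Definition path_obj (R : realType) (M : Type) (c : M -> R) (lam gam : R) (m0 : M)
  (s : seq M) : R :=
  c (last m0 s) + lam * \sum_(k < size s) gam ^+ k.+1 * c (nth m0 s k).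

Definition z_lambda (R : realType) (M : Type) (c : M -> R) (S : M -> set M)
  (lam gam : R) (m0 : M) (K : nat) : R :=
  inf [set path_obj c lam gam m0 s | s in paths_K S m0 K].

Definition K_max (R : realType) (cmin cmax lam gam : R) : R :=
  if gam == 1 then cmax / (lam * cmin)
  else ln (1 + (gam - 1) * cmax / (lam * gam * cmin)) / ln gam.

(* Main.v *)
Require Import Defs.
From HB Require Import structures.
From mathcomp Require Import all_boot all_order all_algebra.
From mathcomp Require Import all_classical all_reals all_analysis.
From mathcomp Require Import ring lra.
Import Order.TTheory GRing.Theory Num.Theory.
Local Open Scope classical_set_scope.
Local Open Scope ring_scope.

Lemma exists_path (M : Type) (S : M -> set M) :
  (forall m, S m !=set0) -> forall K m, exists s, size s = K /\ is_interp_path S m s.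
Proof.
move=> hS; elim=> [|K IH] m; first by exists [::].
have [m' hm'] := hS m; have [s [hs1 hs2]] := IH m'.
by exists (m' :: s); rewrite /= hs1.
Qed.

Theorem proposition2 (R : realType) (M : Type) (c : M -> R) (S : M -> set M)
  (m0 : M) (cmin cmax gam lam : R) :
  (forall m, c m > 0) ->
  (forall m, S m !=set0) ->
  0 < cmin -> (forall m, cmin <= c m <= cmax) ->
  1 <= gam -> 0 < lam ->
  forall K_opt : nat,
    (forall K : nat, z_lambda c S lam gam m0 K_opt <= z_lambda c S lam gam m0 K) ->
    (K_opt%:R <= K_max cmin cmax lam gam).
Proof.
move=> cpos hS cmin0 hc gam1 lam0 K hK.
have gam0 : 0 < gam by apply: lt_le_trans gam1.
pose G := \sum_(k < K) gam ^+ k.+1.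
have lb : cmin + lam * (cmin * G) <= z_lambda c S lam gam m0 K.
  apply: lb_le_inf.
    have [s hs] := @exists_path M S hS K m0.
    by exists (path_obj c lam gam m0 s), s.
  move=> _ [s [hs1 hs2] <-]; rewrite /path_obj hs1.
  apply: lerD; first by case/andP: (hc (last m0 s)).
  rewrite ler_pM2l // /G mulr_sumr; apply: ler_sum => i _.
  rewrite [cmin * _]mulrC ler_wpM2l //; last by case/andP: (hc (nth m0 s i)).
  by apply: exprn_ge0; apply: ltW.
have z0 : z_lambda c S lam gam m0 0 = c m0.
  rewrite /z_lambda.
  have -> : [set path_obj c lam gam m0 s | s in paths_K S m0 0] = [set c m0].
    apply/seteqP; split.
      move=> _ [s [hs1 _] <-]; case: s hs1 => // _.
      by rewrite /path_obj /= big_ord0 mulr0 addr0.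
    move=> _ ->; exists [::]; first by [].
    by rewrite /path_obj /= big_ord0 mulr0 addr0.
  by rewrite inf1.
have key : cmin + lam * (cmin * G) <= cmax.
  apply: (le_trans lb); apply: (le_trans (hK 0%N)); rewrite z0.
  by case/andP: (hc m0).
have key2 : G <= cmax / (lam * cmin).
  rewrite ler_pdivlMr ?mulr_gt0 //.
  have : lam * (cmin * G) <= cmax by apply: le_trans key; rewrite lerDr ltW.
  have -> : G * (lam * cmin) = lam * (cmin * G) by ring.
  by [].
rewrite /K_max; case: eqP => [g1|gn1].
  apply: le_trans key2; rewrite /G g1.
  under eq_bigr do rewrite expr1n.
  by rewrite sumr_const card_ord.
have gam1' : 1 < gam by rewrite lt_neqAle eq_sym gam1 andbT; apply/eqP.
have geo : G * (gam - 1) = gam ^+ K.+1 - gam.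
  rewrite /G; elim: (K) => [|n IH]; first by rewrite big_ord0 mul0r expr1 subrr.
  rewrite big_ord_recr /= mulrDl IH !exprS. ring.
have lng : 0 < ln gam by apply: ln_gt0.
rewrite ler_pdivlMr // mulr_natl -lnXn //.
have hx : 0 <= (gam - 1) * cmax / (lam * gam * cmin).
  apply: divr_ge0; last by rewrite ltW // !mulr_gt0.
  apply: mulr_ge0; first by rewrite subr_ge0.
  by apply: le_trans (ltW cmin0) _; case/andP: (hc m0) => a b; apply: le_trans a b.
rewrite ler_ln ?posrE ?exprn_gt0 //; last by rewrite (lt_le_trans ltr01) // lerDl.
have gm1 : 0 < gam - 1 by rewrite subr_gt0.
have : G * (gam - 1) <= cmax / (lam * cmin) * (gam - 1) by rewrite ler_pM2r.
rewrite geo exprS => h.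
rewrite -(ler_pM2l gam0) mulrDr mulr1.
apply: le_trans (_ : gam + cmax / (lam * cmin) * (gam - 1) <= _).
  by rewrite -lerBlDl.
rewrite lerD2l le_eqVlt; apply/orP; left; apply/eqP.
field; apply/and3P; split; apply: lt0r_neq0 => //.
Qed.
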